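(* Let $G,R,M_\odot,\mu,k,N_A>0$, $\delta>0$, and let $\gamma$ be a positive integer. Set $C=\frac{1}{\gamma!}\prod_{i=1}^{\gamma}\left(\frac{3}{\delta}+i\right)$, $\rho(r)=\frac{3M_\odot}{4\pi R^3}C\left[1-(r/R)^\delta\right]^\gamma$, $M(r)=\int_0^r4\pi s^2\rho(s)\,ds$, $P(r)=\int_r^R GM(s)\rho(s)s^{-2}\,ds$, and define the temperature by the perfect gas law $T(r)=\frac{\mu\,P(r)}{kN_A\,\rho(r)}$ for $0\le r<R$. Then with $x=r/R\in[0,1)$, $$T(r)=3\frac{\mu}{kN_A}\frac{GM_\odot}{R}\,C\,\frac{1}{\delta^2}\,\frac{1}{(1-x^\delta)^\gamma}\sum_{m=0}^{\gamma}\frac{(-\gamma)_m}{m!\left(\frac{3}{\delta}+m\right)\left(\frac{2}{\delta}+m\right)}\left[\frac{\gamma!}{\left(\frac{2}{\delta}+m+1\right)_\gamma}-x^{m\delta+2}\,{}_2F_1\!\left(-\gamma,\frac{2}{\delta}+m;\frac{2}{\delta}+m+1;x^\delta\right)\right],$$ and moreover $T(r)\to0$ as $r\to R^-$.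
   Context: $(a)_m=a(a+1)\cdots(a+m-1)$, $(a)_0=1$, is the Pochhammer symbol. ${}_2F_1(a,b;c;z)=\sum_{k\ge0}\frac{(a)_k(b)_k}{(c)_k k!}z^k$ is Gauss' hypergeometric function. *)

(* Defs.v *)
From Stdlib Require Import Reals Factorial.
From Coquelicot Require Import Coquelicot.
Open Scope R_scope.

Fixpoint poch (a : R) (m : nat) : R :=
  match m with O => 1 | S m' => poch a m' * (a + INR m') end.

Fixpoint prod1 (f : nat -> R) (n : nat) : R :=
  match n with O => 1 | S n' => prod1 f n' * f n end.

(* real power x^d for x >= 0 (with 0^d = 0, the right value for d > 0) *)
Definition rpow (x d : R) : R := if Rle_dec x 0 then 0 else Rpower x d.

Definition F21 (a b c z : R) : R :=
  Series (fun k => poch a k * poch b k / (poch c k * INR (fact k)) * z ^ k).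

Definition Cconst (delta : R) (gamma : nat) : R :=
  / INR (fact gamma) * prod1 (fun i => 3 / delta + INR i) gamma.

Definition rho (Msun Rs delta : R) (gamma : nat) (r : R) : R :=
  3 * Msun / (4 * PI * Rs ^ 3) * Cconst delta gamma * (1 - rpow (r / Rs) delta) ^ gamma.

Definition Mass (Msun Rs delta : R) (gamma : nat) (r : R) : R :=
  RInt (fun s => 4 * PI * s ^ 2 * rho Msun Rs delta gamma s) 0 r.

Definition Press (G Msun Rs delta : R) (gamma : nat) (r : R) : R :=
  RInt (fun s => G * Mass Msun Rs delta gamma s * rho Msun Rs delta gamma s / s ^ 2) r Rs.

Definition Temp (G Msun Rs mu kB NA delta : R) (gamma : nat) (r : R) : R :=
  mu * Press G Msun Rs delta gamma r / (kB * NA * rho Msun Rs delta gamma r).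

(* Main.v *)
Require Import Defs.
From Stdlib Require Import Reals Factorial Lra Lia.
From Coquelicot Require Import Coquelicot.
Open Scope R_scope.


Lemma rpow_pos u p : 0 < u -> rpow u p = Rpower u p.
Proof. intros H; unfold rpow; destruct (Rle_dec u 0); [lra|reflexivity]. Qed.
Lemma rpow_nonpos u p : u <= 0 -> rpow u p = 0.
Proof. intros H; unfold rpow; destruct (Rle_dec u 0); [reflexivity|lra]. Qed.
Lemma rpow_ge0 u p : 0 <= rpow u p.
Proof. unfold rpow; destruct (Rle_dec u 0); [lra|]. unfold Rpower; left; apply exp_pos. Qed.

Lemma rpow_small p eps : 0 < p -> 0 < eps -> exists d, 0 < d /\ forall u, 0 < u < d -> rpow u p < eps.
Proof.
  intros Hp He. exists (Rpower eps (/p)). split. unfold Rpower; apply exp_pos.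
  intros u Hu. rewrite rpow_pos by lra.
  replace eps with (Rpower (Rpower eps (/p)) p) at 1.
  apply Rlt_Rpower_l; lra.
  rewrite Rpower_mult. replace (/p * p) with 1 by (field; lra). apply Rpower_1; lra.
Qed.

Lemma ball_R (x e y : R) : Rabs (y - x) < e -> ball x e y.
Proof. intros H. exact H. Qed.

Lemma rpow_cont p u : 0 < p -> continuous (fun t => rpow t p) u.
Proof.
  intros Hp. destruct (Rlt_dec 0 u) as [Hu|Hu].
  - apply continuous_ext_loc with (fun t => Rpower t p).
    apply locally_interval with 0 p_infty; simpl; auto.
    intros y Hy _. symmetry; apply rpow_pos; auto.
    apply (@ex_derive_continuous R_AbsRing R_NormedModule). exists (p * Rpower u (p - 1)).
    apply is_derive_Reals. apply derivable_pt_lim_power; auto.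
  - destruct (Rlt_dec u 0) as [Hu'|Hu'].
    + apply continuous_ext_loc with (fun _ => 0).
      apply locally_interval with m_infty 0; simpl; auto.
      intros y _ Hy. symmetry; apply rpow_nonpos; lra.
      apply continuous_const.
    + assert (u = 0) by lra. subst u.
      apply filterlim_locally. intros eps.
      destruct (rpow_small p eps Hp (cond_pos eps)) as [d [Hd Hs]].
      exists (mkposreal d Hd). intros y Hy. apply ball_R.
      change (Rabs (y - 0) < d) in Hy.
      rewrite (rpow_nonpos 0) by lra.
      destruct (Rle_dec y 0). rewrite rpow_nonpos by auto. rewrite Rminus_0_r, Rabs_R0. apply cond_pos.
      rewrite Rminus_0_r, Rabs_pos_eq by apply rpow_ge0. apply Hs.
      rewrite Rminus_0_r in Hy. apply Rabs_lt_between in Hy. lra.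
Qed.

Lemma rpow_deriv q u : 1 < q -> is_derive (fun t => rpow t q) u (q * rpow u (q - 1)).
Proof.
  intros Hq. destruct (Rlt_dec 0 u) as [Hu|Hu].
  - apply is_derive_ext_loc with (fun t => Rpower t q).
    apply locally_interval with 0 p_infty; simpl; auto.
    intros y Hy _. symmetry; apply rpow_pos; auto.
    rewrite rpow_pos by auto.
    apply is_derive_Reals. apply derivable_pt_lim_power; auto.
  - destruct (Rlt_dec u 0) as [Hu'|Hu'].
    + rewrite rpow_nonpos by lra. rewrite Rmult_0_r.
      apply is_derive_ext_loc with (fun _ => 0).
      apply locally_interval with m_infty 0; simpl; auto.
      intros y _ Hy. symmetry; apply rpow_nonpos; lra.
      apply (is_derive_const 0).
    + assert (u = 0) by lra. subst u.
      rewrite (rpow_nonpos 0) by lra. rewrite Rmult_0_r.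
      apply is_derive_Reals. intros eps He.
      destruct (rpow_small (q-1) eps ltac:(lra) He) as [d [Hd Hs]].
      exists (mkposreal d Hd). intros h Hh Hhd. simpl in Hhd.
      rewrite Rplus_0_l, (rpow_nonpos 0) by lra. rewrite Rminus_0_r.
      destruct (Rle_dec h 0).
      * rewrite rpow_nonpos by auto. rewrite Rminus_0_r. unfold Rdiv. rewrite Rmult_0_l, Rabs_R0; auto.
      * replace ((rpow h q - 0) / h) with (rpow h (q-1)).
        rewrite Rabs_pos_eq by apply rpow_ge0. apply Hs.
        apply Rabs_lt_between in Hhd; lra.
        rewrite !rpow_pos by lra.
        replace q with ((q-1) + 1) at 2 by ring. rewrite Rpower_plus, Rpower_1 by lra. field. lra.
Qed.


Lemma sum_shift (a : nat -> R) n : sum_f_R0 a (S n) = a 0%nat + sum_f_R0 (fun j => a (S j)) n.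
Proof. rewrite (decomp_sum a (S n)) by lia. reflexivity. Qed.

Lemma sum_minus' (a b : nat -> R) n : sum_f_R0 (fun j => a j - b j) n = sum_f_R0 a n - sum_f_R0 b n.
Proof. induction n; simpl; [ring|rewrite IHn; ring]. Qed.

Lemma sum_scal_l (a : nat -> R) k n : sum_f_R0 (fun j => k * a j) n = k * sum_f_R0 a n.
Proof. induction n; simpl; [ring|rewrite IHn; ring]. Qed.

Lemma poch_front b j : poch b (S j) = b * poch (b+1) j.
Proof.
  induction j. simpl; ring.
  change (poch b (S (S j))) with (poch b (S j) * (b + INR (S j))).
  change (poch (b+1) (S j)) with (poch (b+1) j * (b + 1 + INR j)).
  rewrite IHj, S_INR. ring.
Qed.

Lemma poch_pos b j : 0 < b -> 0 < poch b j.
Proof.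
  intros Hb; induction j; simpl. lra. apply Rmult_lt_0_compat; auto. pose proof (pos_INR j); lra.
Qed.

Lemma poch_neg_zero n j : (n < j)%nat -> poch (- INR n) j = 0.
Proof.
  induction j; intros H. lia.
  simpl. destruct (Nat.eq_dec j n). subst; ring.
  rewrite IHj by lia. ring.
Qed.

Definition cb (n j : nat) : R := poch (- INR n) j / INR (fact j).

Lemma cb_0 n : cb n 0 = 1.
Proof. unfold cb; simpl; field. Qed.

Lemma cb_big n j : (n < j)%nat -> cb n j = 0.
Proof. intros H; unfold cb; rewrite poch_neg_zero by auto; unfold Rdiv; ring. Qed.

Lemma cb_pascal n j : cb (S n) (S j) = cb n (S j) - cb n j.
Proof.
  unfold cb. rewrite poch_front.
  change (poch (- INR n) (S j)) with (poch (- INR n) j * (- INR n + INR j)).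
  replace (- INR (S n) + 1) with (- INR n) by (rewrite S_INR; ring).
  change (fact (S j)) with (S j * fact j)%nat. rewrite mult_INR, S_INR.
  assert (0 < INR (fact j)) by (apply lt_0_INR; apply lt_O_fact).
  pose proof (pos_INR j). rewrite S_INR. field. lra.
Qed.

Lemma binom_cb n y : (1 - y) ^ n = sum_f_R0 (fun j => cb n j * y ^ j) n.
Proof.
  induction n.
  - simpl. rewrite cb_0. ring.
  - rewrite sum_shift, cb_0.
    rewrite (sum_eq _ (fun j => cb n (S j) * y ^ S j - y * (cb n j * y ^ j))).
    2:{ intros i _. rewrite cb_pascal. simpl. ring. }
    rewrite sum_minus', sum_scal_l.
    assert (E : sum_f_R0 (fun j => cb n j * y ^ j) (S n) = sum_f_R0 (fun j => cb n j * y ^ j) n).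
    { rewrite tech5, cb_big by lia. ring. }
    rewrite sum_shift, cb_0 in E. simpl in E |- *. rewrite <- IHn in E |- *. lra.
Qed.

Lemma beta_sum n b : 0 < b -> sum_f_R0 (fun j => cb n j / (b + INR j)) n = INR (fact n) / (b * poch (b+1) n).
Proof.
  revert b. induction n; intros b Hb.
  - simpl. rewrite cb_0. field. lra.
  - rewrite sum_shift, cb_0.
    rewrite (sum_eq _ (fun j => cb n (S j) / (b + INR (S j)) - cb n j / ((b + 1) + INR j))).
    2:{ intros i _. rewrite cb_pascal, S_INR. replace (b + (INR i + 1)) with (b + 1 + INR i) by ring.
        field. pose proof (pos_INR i); lra. }
    rewrite sum_minus', IHn by lra.
    assert (E : sum_f_R0 (fun j => cb n j / (b + INR j)) (S n) = sum_f_R0 (fun j => cb n j / (b + INR j)) n).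
    { rewrite tech5, (cb_big n (S n)) by lia. unfold Rdiv; rewrite Rmult_0_l; ring. }
    rewrite sum_shift, cb_0, IHn in E by lra. change (INR 0) with 0 in E.
    assert (Hs : sum_f_R0 (fun j => cb n (S j) / (b + INR (S j))) n = INR (fact n) / (b * poch (b + 1) n) - 1/b).
    { rewrite Rplus_0_r in E. lra. }
    rewrite Hs.
    pose proof (poch_front (b+1) n) as F1.
    change (poch (b+1) (S n)) with (poch (b+1) n * (b + 1 + INR n)) in F1.
    change (poch (b+1) (S n)) with (poch (b+1) n * (b + 1 + INR n)).
    replace (b + 1 + 1) with (b + 2) in F1 |- * by ring.
    assert (0 < poch (b+1) n) by (apply poch_pos; lra).
    assert (0 < poch (b+2) n) by (apply poch_pos; lra).
    pose proof (pos_INR n).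
    change (fact (S n)) with (S n * fact n)%nat. rewrite mult_INR, S_INR.
    assert (poch (b + 2) n = poch (b+1) n * (b + 1 + INR n) / (b+1)) as F2.
    { rewrite F1. field. lra. }
    rewrite F2. change (INR 0) with 0. rewrite Rplus_0_r. field. repeat split; lra.
Qed.


Lemma F21_trunc n b c z : F21 (- INR n) b c z =
  sum_f_R0 (fun k => poch (- INR n) k * poch b k / (poch c k * INR (fact k)) * z ^ k) n.
Proof.
  unfold F21. apply is_series_unique.
  set (a := fun k => poch (- INR n) k * poch b k / (poch c k * INR (fact k)) * z ^ k).
  assert (Hk : forall k, (n <= k)%nat -> sum_n a k = sum_f_R0 a n).
  { intros k Hk. rewrite sum_n_Reals. change (sum_f_R0 a k = sum_f_R0 a n). induction Hk. reflexivity.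
    rewrite tech5, IHHk. unfold a. rewrite poch_neg_zero by lia. unfold Rdiv; ring. }
  apply filterlim_locally. intros eps. exists n. intros k Hk'.
  rewrite Hk by lia. apply ball_center.
Qed.

Lemma e_deriv Rs q s : 0 < Rs -> 1 < q ->
  is_derive (fun s => rpow (s / Rs) q) s (q / Rs * rpow (s / Rs) (q - 1)).
Proof.
  intros HR Hq.
  assert (H1 : is_derive (fun s => s / Rs) s (/Rs)) by (auto_derive; [auto | field; lra]).
  pose proof (is_derive_comp (fun t => rpow t q) (fun s => s / Rs) s _ _ (rpow_deriv q (s/Rs) Hq) H1) as H.
  simpl in H. unfold scal in H; simpl in H. unfold mult in H; simpl in H.
  replace (q / Rs * rpow (s / Rs) (q - 1)) with (/ Rs * (q * rpow (s / Rs) (q - 1))) by (field; lra).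
  exact H.
Qed.

Lemma e_cont Rs p s : 0 < Rs -> 0 < p -> continuous (fun s => rpow (s / Rs) p) s.
Proof.
  intros HR Hp.
  apply (continuous_comp (fun s => s / Rs) (fun t => rpow t p)).
  apply (@ex_derive_continuous R_AbsRing R_NormedModule). auto_derive. auto.
  apply rpow_cont; auto.
Qed.

Lemma is_derive_eq (f : R -> R) x l l' : is_derive f x l -> l = l' -> is_derive f x l'.
Proof. intros H ->; exact H. Qed.

Lemma sum_deriv (f df : nat -> R -> R) x n :
  (forall m, (m <= n)%nat -> is_derive (f m) x (df m x)) ->
  is_derive (fun t => sum_f_R0 (fun m => f m t) n) x (sum_f_R0 (fun m => df m x) n).
Proof.
  induction n; intros H; simpl. apply H; lia.
  apply (is_derive_plus (fun t => sum_f_R0 (fun m => f m t) n) (f (S n))).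
  apply IHn; intros; apply H; lia. apply H; lia.
Qed.

Lemma sum_cont (f : nat -> R -> R) x n :
  (forall m, (m <= n)%nat -> continuous (f m) x) ->
  continuous (fun t => sum_f_R0 (fun m => f m t) n) x.
Proof.
  induction n; intros H; simpl. apply H; lia.
  apply (@continuous_plus R_UniformSpace R_AbsRing R_NormedModule (fun t => sum_f_R0 (fun m => f m t) n) (f (S n))).
  apply IHn; intros; apply H; lia. apply H; lia.
Qed.

Lemma sum_RInt (f : nat -> R -> R) (I : nat -> R) x y n :
  (forall m, (m <= n)%nat -> is_RInt (f m) x y (I m)) ->
  is_RInt (fun t => sum_f_R0 (fun m => f m t) n) x y (sum_f_R0 I n).
Proof.
  induction n; intros H; simpl. apply H; lia.
  apply (is_RInt_plus (fun t => sum_f_R0 (fun m => f m t) n) (f (S n))).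
  apply IHn; intros; apply H; lia. apply H; lia.
Qed.

Definition PS (Rs : R) (a p : nat -> R) (n : nat) (s : R) : R :=
  sum_f_R0 (fun j => a j * rpow (s / Rs) (p j)) n.

Lemma PS_cont Rs a p n s : 0 < Rs -> (forall j, (j <= n)%nat -> 0 < p j) -> continuous (PS Rs a p n) s.
Proof.
  intros HR Hp. unfold PS. apply sum_cont. intros m Hm.
  apply (@continuous_mult R_UniformSpace R_AbsRing (fun _ => a m) (fun s => rpow (s / Rs) (p m))).
  apply continuous_const. apply e_cont; auto.
Qed.

Lemma PS_RInt Rs a p n x y : 0 < Rs -> (forall j, (j <= n)%nat -> 0 < p j) ->
  is_RInt (PS Rs a p n) x y
   (PS Rs (fun j => a j * Rs / (p j + 1)) (fun j => p j + 1) n y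
    - PS Rs (fun j => a j * Rs / (p j + 1)) (fun j => p j + 1) n x).
Proof.
  intros HR Hp.
  apply (is_RInt_derive (PS Rs (fun j => a j * Rs / (p j + 1)) (fun j => p j + 1) n) (PS Rs a p n)).
  - intros t _. unfold PS at 1.
    eapply is_derive_eq.
    apply (sum_deriv (fun j t => a j * Rs / (p j + 1) * rpow (t / Rs) (p j + 1))
             (fun j t => a j * Rs / (p j + 1) * ((p j + 1) / Rs * rpow (t / Rs) (p j + 1 - 1)))).
    intros m Hm. apply is_derive_scal. apply e_deriv; auto. specialize (Hp m Hm); lra.
    unfold PS. apply sum_eq. intros i Hi. specialize (Hp i Hi).
    replace (p i + 1 - 1) with (p i) by ring. field. split; lra.
  - intros t _. apply PS_cont; auto.
Qed.

Lemma PS_0 Rs a p n : 0 < Rs -> PS Rs a p n 0 = 0.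
Proof.
  intros HR. unfold PS. induction n; simpl.
  rewrite rpow_nonpos. ring. unfold Rdiv; rewrite Rmult_0_l; lra.
  rewrite IHn, rpow_nonpos. ring. unfold Rdiv; rewrite Rmult_0_l; lra.
Qed.

Lemma Rpower_1_base p : Rpower 1 p = 1.
Proof. unfold Rpower. rewrite ln_1, Rmult_0_r. apply exp_0. Qed.

Lemma PS_R Rs a p n : 0 < Rs -> PS Rs a p n Rs = sum_f_R0 a n.
Proof.
  intros HR. unfold PS. apply sum_eq. intros i _.
  replace (Rs / Rs) with 1 by (field; lra). rewrite rpow_pos by lra. rewrite Rpower_1_base. ring.
Qed.

Lemma rpow_mul_pow u q d k : 0 <= u -> 0 < q -> rpow u q * (rpow u d) ^ k = rpow u (q + INR k * d).
Proof.
  intros Hu Hq. destruct (Rle_dec u 0).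
  - rewrite !(rpow_nonpos u) by auto. ring.
  - rewrite !rpow_pos by lra. rewrite <- Rpower_pow by (unfold Rpower; apply exp_pos).
    rewrite Rpower_mult, <- Rpower_plus. f_equal. ring.
Qed.

Lemma expand u q d n : 0 <= u -> 0 < q ->
  rpow u q * (1 - rpow u d) ^ n = sum_f_R0 (fun j => cb n j * rpow u (q + INR j * d)) n.
Proof.
  intros Hu Hq. rewrite binom_cb, scal_sum. apply sum_eq. intros i _.
  rewrite <- rpow_mul_pow by auto. ring.
Qed.


Ltac toR := match goal with |- @eq _ ?a ?b => change (@eq R a b) end.

Lemma rpow_2 u : 0 < u -> rpow u 2 = u ^ 2.
Proof. intros H. rewrite rpow_pos by auto. replace 2 with (INR 2) by (simpl; ring). apply Rpower_pow; auto. Qed.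

Lemma is_RInt_eq (f : R -> R) a b l l' : is_RInt f a b l -> l = l' -> is_RInt f a b l'.
Proof. intros H ->; exact H. Qed.

Lemma is_RInt_scalR (f : R -> R) a b k l : is_RInt f a b l -> is_RInt (fun y => k * f y) a b (k * l).
Proof. intros H. exact (is_RInt_scal f a b k l H). Qed.

Definition Kc (Msun Rs delta : R) (gamma : nat) := 3 * Msun / (4 * PI * Rs ^ 3) * Cconst delta gamma.

Lemma mass_eq Msun Rs d n r : 0 < Rs -> 0 < d -> 0 <= r ->
  Mass Msun Rs d n r = 4 * PI * Kc Msun Rs d n * Rs ^ 2 *
    PS Rs (fun j => cb n j * Rs / ((2 + INR j * d) + 1)) (fun j => (2 + INR j * d) + 1) n r.
Proof.
  intros HR Hd Hr. unfold Mass.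
  rewrite (RInt_ext _ (fun s => 4 * PI * Kc Msun Rs d n * Rs ^ 2 * PS Rs (cb n) (fun j => 2 + INR j * d) n s)).
  - apply is_RInt_unique. eapply is_RInt_eq.
    apply (is_RInt_scalR _ _ _ (4 * PI * Kc Msun Rs d n * Rs ^ 2)).
    apply (PS_RInt Rs (cb n) (fun j => 2 + INR j * d) n 0 r HR). intros j _; pose proof (pos_INR j); nra.
    rewrite PS_0 by auto. rewrite Rminus_0_r. reflexivity.
  - intros x Hx. toR. rewrite Rmin_left, Rmax_right in Hx by lra.
    unfold rho, PS. rewrite <- expand by (try apply Rlt_le; try apply Rdiv_lt_0_compat; lra).
    rewrite rpow_2 by (apply Rdiv_lt_0_compat; lra). unfold Kc. field. split; [lra | apply PI_neq0].
Qed.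

Lemma press_integrand G Msun Rs d n s : 0 < Rs -> 0 < d -> 0 < s ->
  G * Mass Msun Rs d n s * rho Msun Rs d n s / s ^ 2 =
  G * 4 * PI * Kc Msun Rs d n ^ 2 * Rs *
   sum_f_R0 (fun m => cb n m / ((2 + INR m * d) + 1) * PS Rs (cb n) (fun j => 1 + INR m * d + INR j * d) n s) n.
Proof.
  intros HR Hd Hs.
  assert (Hu : 0 < s / Rs) by (apply Rdiv_lt_0_compat; lra).
  rewrite (sum_eq _ (fun m => (cb n m * Rs / ((2 + INR m * d) + 1) * rpow (s / Rs) ((2 + INR m * d) + 1)) *
        ((1 - rpow (s / Rs) d) ^ n / (Rs * (s / Rs) ^ 2)))).
  2:{ intros m _. unfold PS. rewrite <- expand by (try lra; pose proof (pos_INR m); nra).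
      rewrite !rpow_pos by auto. replace (2 + INR m * d + 1) with ((1 + INR m * d) + 2) by ring.
      rewrite (Rpower_plus (1 + INR m * d) 2 (s / Rs)). rewrite <- (rpow_pos (s / Rs) 2) by exact Hu. rewrite (rpow_2 _ Hu).
      field. pose proof (pos_INR m). repeat split; try lra; nra. }
  rewrite <- scal_sum. rewrite mass_eq by lra. unfold PS, rho, Kc. field.
  split; [lra|]. split; [lra|]. apply PI_neq0.
Qed.

Lemma press_eq G Msun Rs d n r : 0 < Rs -> 0 < d -> 0 <= r <= Rs ->
  Press G Msun Rs d n r =
  G * 4 * PI * Kc Msun Rs d n ^ 2 * Rs *
   sum_f_R0 (fun m => cb n m / ((2 + INR m * d) + 1) *
     (PS Rs (fun j => cb n j * Rs / ((1 + INR m * d + INR j * d) + 1)) (fun j => (1 + INR m * d + INR j * d) + 1) n Rs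
    - PS Rs (fun j => cb n j * Rs / ((1 + INR m * d + INR j * d) + 1)) (fun j => (1 + INR m * d + INR j * d) + 1) n r)) n.
Proof.
  intros HR Hd Hr. unfold Press.
  rewrite (RInt_ext _ (fun s => G * 4 * PI * Kc Msun Rs d n ^ 2 * Rs *
   sum_f_R0 (fun m => cb n m / ((2 + INR m * d) + 1) * PS Rs (cb n) (fun j => 1 + INR m * d + INR j * d) n s) n)).
  - apply is_RInt_unique. apply (is_RInt_scalR _ _ _ (G * 4 * PI * Kc Msun Rs d n ^ 2 * Rs)).
    apply (sum_RInt (fun m s => cb n m / ((2 + INR m * d) + 1) * PS Rs (cb n) (fun j => 1 + INR m * d + INR j * d) n s)).
    intros m Hm. apply (is_RInt_scalR _ _ _ (cb n m / ((2 + INR m * d) + 1))).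
    apply PS_RInt; auto. intros j _. pose proof (pos_INR j); pose proof (pos_INR m); nra.
  - intros x Hx. toR. rewrite Rmin_left, Rmax_right in Hx by lra.
    apply press_integrand; lra.
Qed.


Lemma poch_ratio b k : 0 < b -> poch b k = b * poch (b+1) k / (b + INR k).
Proof.
  intros Hb. pose proof (poch_front b k) as H. simpl in H. rewrite <- H.
  field. pose proof (pos_INR k); lra.
Qed.

Lemma fact_pos k : 0 < INR (fact k).
Proof. apply lt_0_INR; apply lt_O_fact. Qed.

Lemma partA Rs d n m : 0 < d ->
  sum_f_R0 (fun j => cb n j * Rs / ((1 + INR m * d + INR j * d) + 1)) n =
  Rs / d * (INR (fact n) / ((2 / d + INR m) * poch (2 / d + INR m + 1) n)).
Proof.
  intros Hd. assert (Hb : 0 < 2 / d + INR m) by (pose proof (pos_INR m); assert (0 < 2/d) by (apply Rdiv_lt_0_compat; lra); lra).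
  rewrite <- beta_sum by auto. rewrite <- sum_scal_l. apply sum_eq. intros j _.
  pose proof (pos_INR j). assert (0 <= INR m * d) by (apply Rmult_le_pos; [apply pos_INR|lra]). assert (0 <= INR j * d) by (apply Rmult_le_pos; lra). field. split; lra.
Qed.

Lemma partB Rs d n m r : 0 < Rs -> 0 < d -> 0 <= r / Rs ->
  PS Rs (fun j => cb n j * Rs / ((1 + INR m * d + INR j * d) + 1)) (fun j => (1 + INR m * d + INR j * d) + 1) n r =
  Rs / (d * (2 / d + INR m)) * (rpow (r / Rs) (INR m * d + 2) *
     F21 (- INR n) (2 / d + INR m) (2 / d + INR m + 1) (rpow (r / Rs) d)).
Proof.
  intros HR Hd Hx. set (x := r / Rs) in *. assert (Hb : 0 < 2 / d + INR m) by (pose proof (pos_INR m); assert (0 < 2/d) by (apply Rdiv_lt_0_compat; lra); lra).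
  rewrite F21_trunc, scal_sum, <- sum_scal_l. unfold PS. apply sum_eq. intros k _.
  replace (1 + INR m * d + INR k * d + 1) with (INR m * d + 2 + INR k * d) by ring.
  rewrite <- rpow_mul_pow by (first [exact Hx | assert (0 <= INR m * d) by (apply Rmult_le_pos; [apply pos_INR|lra]); lra]).

  rewrite (poch_ratio (2 / d + INR m) k Hb). unfold cb.
  pose proof (fact_pos k). pose proof (pos_INR k). pose proof (pos_INR m).
  assert (0 < poch (2 / d + INR m + 1) k) by (apply poch_pos; lra).
  assert (0 <= INR m * d) by (apply Rmult_le_pos; lra). assert (0 <= INR k * d) by (apply Rmult_le_pos; lra). unfold x in *. field. repeat split; lra.
Qed.


Lemma prod1_pos d n : 0 < d -> 0 < prod1 (fun i => 3 / d + INR i) n.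
Proof.
  intros Hd. induction n. simpl; lra.
  change (0 < prod1 (fun i => 3/d + INR i) n * (3/d + INR (S n))). apply Rmult_lt_0_compat; auto.
  assert (0 < 3 / d) by (apply Rdiv_lt_0_compat; lra). pose proof (pos_INR (S n)). lra.
Qed.

Lemma Cconst_pos d n : 0 < d -> 0 < Cconst d n.
Proof.
  intros Hd. unfold Cconst. apply Rmult_lt_0_compat. apply Rinv_0_lt_compat, fact_pos. apply prod1_pos; auto.
Qed.

Lemma one_minus_pos Rs d r : 0 < Rs -> 0 < d -> 0 <= r < Rs -> 0 < 1 - rpow (r / Rs) d.
Proof.
  intros HR Hd Hr. destruct (Rle_dec (r / Rs) 0). rewrite rpow_nonpos by auto. lra.
  rewrite rpow_pos by lra. rewrite <- (Rpower_1_base d).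
  assert (r / Rs < 1). { apply (Rmult_lt_reg_r Rs); [lra|]. unfold Rdiv; rewrite Rmult_assoc, Rinv_l, Rmult_1_r by lra; lra. }
  pose proof (Rlt_Rpower_l (r / Rs) 1 d Hd ltac:(lra)). lra.
Qed.

Lemma Temp_eq G Rs Msun mu kB NA delta gamma r :
  0 < G -> 0 < Rs -> 0 < Msun -> 0 < mu -> 0 < kB -> 0 < NA -> 0 < delta -> 0 <= r < Rs ->
     Temp G Msun Rs mu kB NA delta gamma r =
     3 * (mu / (kB * NA)) * (G * Msun / Rs) * Cconst delta gamma * (1 / delta ^ 2)
     * (1 / (1 - rpow (r / Rs) delta) ^ gamma)
     * sum_f_R0 (fun m =>
         poch (- INR gamma) m
         / (INR (fact m) * (3 / delta + INR m) * (2 / delta + INR m))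
         * (INR (fact gamma) / poch (2 / delta + INR m + 1) gamma
            - rpow (r / Rs) (INR m * delta + 2)
              * F21 (- INR gamma) (2 / delta + INR m) (2 / delta + INR m + 1)
                    (rpow (r / Rs) delta))) gamma.
Proof.
  intros HG HR HM Hmu HkB HNA Hd Hr.
  unfold Temp. rewrite press_eq by lra.
  rewrite (sum_eq _ (fun m => Rs / delta ^ 2 * (poch (- INR gamma) m
         / (INR (fact m) * (3 / delta + INR m) * (2 / delta + INR m))
         * (INR (fact gamma) / poch (2 / delta + INR m + 1) gamma
            - rpow (r / Rs) (INR m * delta + 2)
              * F21 (- INR gamma) (2 / delta + INR m) (2 / delta + INR m + 1)
                    (rpow (r / Rs) delta))))).
  2:{ intros m _. rewrite PS_R, partA, partB by (try apply Rdiv_le_0_compat; lra).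
      unfold cb. pose proof (fact_pos m). pose proof (pos_INR m).
      assert (0 <= INR m * delta) by (apply Rmult_le_pos; lra).
      assert (0 < 3 / delta) by (apply Rdiv_lt_0_compat; lra).
      assert (0 < 2 / delta) by (apply Rdiv_lt_0_compat; lra).
      assert (0 < poch (2 / delta + INR m + 1) gamma) by (apply poch_pos; lra).
      field. repeat split; lra. }
  rewrite sum_scal_l. unfold rho, Kc.
  pose proof (Cconst_pos delta gamma Hd). pose proof (one_minus_pos Rs delta r HR Hd Hr).
  pose proof PI_RGT_0.
  assert (0 < (1 - rpow (r / Rs) delta) ^ gamma) by (apply pow_lt; lra).
  field. repeat split; lra.
Qed.


Lemma e_le1 Rs d t : 0 < Rs -> 0 < d -> t <= Rs -> rpow (t / Rs) d <= 1.
Proof.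
  intros HR Hd Ht. destruct (Rle_dec (t / Rs) 0). rewrite rpow_nonpos by auto; lra.
  rewrite rpow_pos by lra. rewrite <- (Rpower_1_base d). apply Rle_Rpower_l. lra.
  split. lra. apply (Rmult_le_reg_r Rs); [lra|]. unfold Rdiv; rewrite Rmult_assoc, Rinv_l, Rmult_1_r by lra; lra.
Qed.

Lemma Kc_pos Msun Rs d n : 0 < Msun -> 0 < Rs -> 0 < d -> 0 < Kc Msun Rs d n.
Proof.
  intros HM HR Hd. unfold Kc. apply Rmult_lt_0_compat; [|apply Cconst_pos; auto].
  pose proof PI_RGT_0. apply Rdiv_lt_0_compat. lra. apply Rmult_lt_0_compat. lra. apply pow_lt; auto.
Qed.

Lemma rho_bounds Msun Rs d n t : 0 < Msun -> 0 < Rs -> 0 < d -> t <= Rs ->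
  0 <= rho Msun Rs d n t <= Kc Msun Rs d n.
Proof.
  intros HM HR Hd Ht. pose proof (Kc_pos Msun Rs d n HM HR Hd).
  pose proof (e_le1 Rs d t HR Hd Ht). pose proof (rpow_ge0 (t / Rs) d).
  unfold rho. unfold Kc in *. split.
  apply Rmult_le_pos. lra. apply pow_le. lra.
  apply Rle_trans with (3 * Msun / (4 * PI * Rs ^ 3) * Cconst d n * 1); [|lra]. apply Rmult_le_compat_l. lra.
  apply Rle_trans with (1 ^ n); [apply pow_incr; lra | rewrite pow1; lra].
Qed.

Lemma rho_mono Msun Rs d n r t : 0 < Msun -> 0 < Rs -> 0 < d -> 0 < r -> r <= t <= Rs ->
  rho Msun Rs d n t <= rho Msun Rs d n r.
Proof.
  intros HM HR Hd Hr Ht. pose proof (Kc_pos Msun Rs d n HM HR Hd).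
  pose proof (e_le1 Rs d t HR Hd (proj2 Ht)).
  assert (rpow (r / Rs) d <= rpow (t / Rs) d).
  { assert (0 < r / Rs) by (apply Rdiv_lt_0_compat; lra).
    rewrite (rpow_pos (r / Rs)), (rpow_pos (t / Rs)) by (try lra; apply Rdiv_lt_0_compat; lra). apply Rle_Rpower_l. lra. split. lra.
    unfold Rdiv. apply Rmult_le_compat_r. left; apply Rinv_0_lt_compat; lra. lra. }
  unfold rho. unfold Kc in *. apply Rmult_le_compat_l. lra. apply pow_incr. lra.
Qed.

Lemma mass_ex Msun Rs d n t : 0 < Rs -> 0 < d -> 0 <= t -> ex_RInt (fun s => 4 * PI * s ^ 2 * rho Msun Rs d n s) 0 t.
Proof.
  intros HR Hd Ht.
  apply (ex_RInt_ext (fun s => 4 * PI * Kc Msun Rs d n * Rs ^ 2 * PS Rs (cb n) (fun j => 2 + INR j * d) n s)).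
  - intros x Hx. rewrite Rmin_left, Rmax_right in Hx by lra.
    unfold rho, PS. rewrite <- expand by (try apply Rlt_le; try apply Rdiv_lt_0_compat; lra).
    rewrite rpow_2 by (apply Rdiv_lt_0_compat; lra). unfold Kc. toR. field. split; [lra | apply PI_neq0].
  - eexists. apply (is_RInt_scalR _ _ _ (4 * PI * Kc Msun Rs d n * Rs ^ 2)).
    apply (PS_RInt Rs (cb n) (fun j => 2 + INR j * d) n 0 t HR). intros j _; pose proof (pos_INR j); nra.
Qed.

Lemma mass_bound Msun Rs d n t : 0 < Msun -> 0 < Rs -> 0 < d -> 0 <= t <= Rs ->
  Rabs (Mass Msun Rs d n t) <= 4 * PI * Kc Msun Rs d n * Rs ^ 3.
Proof.
  intros HM HR Hd Ht. unfold Mass.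
  eapply Rle_trans. apply abs_RInt_le_const with (M := 4 * PI * Kc Msun Rs d n * Rs ^ 2). lra.
  apply mass_ex; lra.
  - intros s Hs. pose proof (rho_bounds Msun Rs d n s HM HR Hd ltac:(lra)). pose proof PI_RGT_0.
    rewrite Rabs_pos_eq. 2:{ apply Rmult_le_pos; [|lra]. apply Rmult_le_pos. lra. apply pow_le; lra. }
    assert (s ^ 2 <= Rs ^ 2) by (apply pow_incr; lra).
    assert (0 <= s ^ 2) by (apply pow_le; lra).
    assert (4 * PI * s ^ 2 <= 4 * PI * Rs ^ 2) by nra.
    replace (4 * PI * Kc Msun Rs d n * Rs ^ 2) with ((4 * PI * Rs ^ 2) * Kc Msun Rs d n) by ring.
    apply Rmult_le_compat; nra.
  - pose proof (Kc_pos Msun Rs d n HM HR Hd). pose proof PI_RGT_0.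
    assert (0 <= 4 * PI * Kc Msun Rs d n * Rs ^ 2) by (apply Rmult_le_pos; [nra| apply pow_le; lra]).
    replace (4 * PI * Kc Msun Rs d n * Rs ^ 3) with (Rs * (4 * PI * Kc Msun Rs d n * Rs ^ 2)) by ring.
    apply Rmult_le_compat_r; lra.
Qed.


Lemma press_ex G Msun Rs d n r : 0 < Rs -> 0 < d -> 0 <= r <= Rs ->
  ex_RInt (fun s => G * Mass Msun Rs d n s * rho Msun Rs d n s / s ^ 2) r Rs.
Proof.
  intros HR Hd Hr.
  apply (ex_RInt_ext (fun s => G * 4 * PI * Kc Msun Rs d n ^ 2 * Rs *
   sum_f_R0 (fun m => cb n m / ((2 + INR m * d) + 1) * PS Rs (cb n) (fun j => 1 + INR m * d + INR j * d) n s) n)).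
  - intros x Hx. rewrite Rmin_left, Rmax_right in Hx by lra. toR.
    symmetry; apply press_integrand; lra.
  - eexists. apply (is_RInt_scalR _ _ _ (G * 4 * PI * Kc Msun Rs d n ^ 2 * Rs)).
    apply (sum_RInt (fun m s => cb n m / ((2 + INR m * d) + 1) * PS Rs (cb n) (fun j => 1 + INR m * d + INR j * d) n s)).
    intros m Hm. apply (is_RInt_scalR _ _ _ (cb n m / ((2 + INR m * d) + 1))).
    apply PS_RInt; auto. intros j _. pose proof (pos_INR j); pose proof (pos_INR m); nra.
Qed.

Lemma Temp_bound G Rs Msun mu kB NA d n r :
  0 < G -> 0 < Rs -> 0 < Msun -> 0 < mu -> 0 < kB -> 0 < NA -> 0 < d -> Rs / 2 <= r < Rs ->
  Rabs (Temp G Msun Rs mu kB NA d n r) <=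
  mu / (kB * NA) * (G * (4 * PI * Kc Msun Rs d n * Rs ^ 3) * (4 / Rs ^ 2)) * (Rs - r).
Proof.
  intros HG HR HM Hmu HkB HNA Hd Hr.
  set (MB := 4 * PI * Kc Msun Rs d n * Rs ^ 3).
  pose proof (Kc_pos Msun Rs d n HM HR Hd). pose proof PI_RGT_0.
  assert (HMB : 0 <= MB) by (unfold MB; apply Rmult_le_pos; [nra | apply pow_le; lra]).
  set (rr := rho Msun Rs d n r).
  assert (Hrr : 0 < rr).
  { unfold rr, rho. apply Rmult_lt_0_compat. fold (Kc Msun Rs d n); auto.
    apply pow_lt. apply one_minus_pos; lra. }
  assert (HP : Rabs (Press G Msun Rs d n r) <= (Rs - r) * (G * MB * rr * (4 / Rs ^ 2))).
  { unfold Press. apply abs_RInt_le_const. lra. apply press_ex; lra.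
    intros t Ht.
    pose proof (mass_bound Msun Rs d n t HM HR Hd ltac:(lra)). fold MB in H1.
    pose proof (rho_bounds Msun Rs d n t HM HR Hd ltac:(lra)).
    pose proof (rho_mono Msun Rs d n r t HM HR Hd ltac:(lra) Ht). fold rr in H3.
    assert (Ht2 : Rs ^ 2 / 4 <= t ^ 2) by (simpl; nra).
    assert (Ht2' : 0 < t ^ 2) by (simpl; nra).
    unfold Rdiv. rewrite !Rabs_mult, (Rabs_pos_eq G), (Rabs_pos_eq (rho _ _ _ _ t)), (Rabs_pos_eq (/ t ^ 2)) by (try lra; left; apply Rinv_0_lt_compat; lra).
    apply Rmult_le_compat. 
    + apply Rmult_le_pos. apply Rmult_le_pos. lra. apply Rabs_pos. lra.
    + left; apply Rinv_0_lt_compat; lra.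
    + apply Rmult_le_compat. apply Rmult_le_pos. lra. apply Rabs_pos. lra.
      apply Rmult_le_compat_l; lra. lra.
    + replace (4 * / Rs ^ 2) with (/ (Rs ^ 2 / 4)) by (field; lra).
      apply Rinv_le_contravar. apply Rdiv_lt_0_compat; [apply pow_lt; lra | lra]. lra. }
  unfold Temp. fold rr. unfold Rdiv. rewrite !Rabs_mult, (Rabs_pos_eq mu), Rabs_inv, (Rabs_pos_eq (kB * NA * rr)) by (try lra; apply Rmult_le_pos; nra).
  assert (0 < kB * NA * rr) by (apply Rmult_lt_0_compat; nra).
  apply Rle_trans with (mu * ((Rs - r) * (G * MB * rr * (4 / Rs ^ 2))) * / (kB * NA * rr)).
  apply Rmult_le_compat_r. left; apply Rinv_0_lt_compat; lra. apply Rmult_le_compat_l; lra.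
  right. field. repeat split; lra.
Qed.


Lemma Temp_lim G Rs Msun mu kB NA d n :
  0 < G -> 0 < Rs -> 0 < Msun -> 0 < mu -> 0 < kB -> 0 < NA -> 0 < d ->
  filterlim (Temp G Msun Rs mu kB NA d n) (at_left Rs) (locally 0).
Proof.
  intros HG HR HM Hmu HkB HNA Hd.
  set (Bc := mu / (kB * NA) * (G * (4 * PI * Kc Msun Rs d n * Rs ^ 3) * (4 / Rs ^ 2))).
  assert (HB : 0 <= Bc).
  { pose proof (Kc_pos Msun Rs d n HM HR Hd). pose proof PI_RGT_0.
    unfold Bc. apply Rmult_le_pos. apply Rlt_le, Rdiv_lt_0_compat; [lra | apply Rmult_lt_0_compat; lra].
    apply Rmult_le_pos. apply Rmult_le_pos. lra. apply Rmult_le_pos. nra. apply pow_le; lra.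
    apply Rlt_le, Rdiv_lt_0_compat. lra. apply pow_lt; lra. }
  apply filterlim_locally. intros eps.
  assert (Hdl : 0 < Rmin (Rs / 2) (eps / (Bc + 1))).
  { apply Rmin_glb_lt. lra. apply Rdiv_lt_0_compat. apply cond_pos. lra. }
  exists (mkposreal _ Hdl). intros y Hy Hlt. simpl in Hy.
  change (Rabs (y - Rs) < Rmin (Rs / 2) (eps / (Bc + 1))) in Hy.
  apply Rabs_lt_between in Hy.
  pose proof (Rmin_l (Rs / 2) (eps / (Bc + 1))). pose proof (Rmin_r (Rs / 2) (eps / (Bc + 1))).
  apply ball_R. rewrite Rminus_0_r.
  eapply Rle_lt_trans. apply Temp_bound; auto; lra. fold Bc.
  apply Rle_lt_trans with (Bc * (eps / (Bc + 1))).
  apply Rmult_le_compat_l; lra.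
  pose proof (cond_pos eps).
  apply (Rmult_lt_reg_r (Bc + 1)). lra. replace (Bc * (eps / (Bc + 1)) * (Bc + 1)) with (Bc * eps) by (field; lra). nra.
Qed.

Theorem mainTheorem5 (G Rs Msun mu kB NA delta : R) (gamma : nat) :
  0 < G -> 0 < Rs -> 0 < Msun -> 0 < mu -> 0 < kB -> 0 < NA -> 0 < delta ->
  (1 <= gamma)%nat ->
  (forall r : R, 0 <= r < Rs ->
     let x := r / Rs in
     Temp G Msun Rs mu kB NA delta gamma r =
     3 * (mu / (kB * NA)) * (G * Msun / Rs) * Cconst delta gamma * (1 / delta ^ 2)
     * (1 / (1 - rpow x delta) ^ gamma)
     * sum_f_R0 (fun m =>
         poch (- INR gamma) m
         / (INR (fact m) * (3 / delta + INR m) * (2 / delta + INR m))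
         * (INR (fact gamma) / poch (2 / delta + INR m + 1) gamma
            - rpow x (INR m * delta + 2)
              * F21 (- INR gamma) (2 / delta + INR m) (2 / delta + INR m + 1)
                    (rpow x delta))) gamma)
  /\ filterlim (Temp G Msun Rs mu kB NA delta gamma) (at_left Rs) (locally 0).
Proof.
  intros HG HR HM Hmu HkB HNA Hd Hg. split.
  - intros r Hr x. unfold x. apply Temp_eq; auto.
  - apply Temp_lim; auto.
Qed.
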